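(* The following non-implications hold; each item asserts the existence of a probability space $(\Omega,\mathcal{F},P)$ and real random variables $X, X_1, X_2, \dots$ on it with the stated properties. (i) There exist such $X,X_n$ with $X_n\xrightarrow{S_1\text{-}d}X$ but not $X_n\xrightarrow{S_2\text{-}d}X$; and there exist such $X,X_n$ with $X_n\xrightarrow{S_2\text{-}d}X$ but not $X_n\xrightarrow{S_1\text{-}d}X$. (ii) There exist such $X,X_n$ with $X_n\xrightarrow{S\text{-}L^\infty}X$ but not $X_n\xrightarrow{S_2\text{-}d}X$. (iii) There exist such $X,X_n$ with $X_n\xrightarrow{S\text{-}L^1}X$ but not $X_n\xrightarrow{S_2\text{-}d}X$. (iv) For every $\alpha>0$ there exist such $X,X_n$ with $X_n\xrightarrow{S_\alpha\text{-}a.s.}X$ but not $X_n\xrightarrow{S_1\text{-}d}X$. (v) For each $i\in\{1,2\}$ there exist such $X,X_n$ with $X_n$ converging completely to $X$ but not $X_n\xrightarrow{S_i\text{-}d}X$.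
   Context: Let $X,X_1,X_2,\dots$ be real random variables on a probability space $(\Omega,\mathcal{F},P)$, and let $F_n(x)=P(X_n\le x)$ and $F(x)=P(X\le x)$ be their distribution functions. - Complete convergence: for every $\varepsilon>0$, $\sum_{n=1}^\infty P(|X_n-X|\ge\varepsilon)<\infty$. - $X_n\xrightarrow{S\text{-}L^p}X$ ($p>0$): $\sum_{n=1}^\infty E[|X_n-X|^p]<\infty$. - $X_n\xrightarrow{S\text{-}L^\infty}X$: $\sum_{n=1}^\infty \|X_n-X\|_\infty<\infty$, where $\|\cdot\|_\infty$ is the essential supremum norm. - $X_n\xrightarrow{S_\alpha\text{-}a.s.}X$ ($\alpha>0$): $\sum_{n=1}^\infty |X_n-X|^\alpha<\infty$ almost surely. - $X_n\xrightarrow{S_1\text{-}d}X$: for every bounded Lipschitz continuous $f:\mathbb{R}\to\mathbb{R}$, $\sum_{n=1}^\infty |E[f(X_n)-f(X)]|<\infty$. - $X_n\xrightarrow{S_2\text{-}d}X$: for every continuity point $x$ of $F$, $\sum_{n=1}^\infty |F_n(x)-F(x)|<\infty$. *)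

(* Defs.v *)
From HB Require Import structures.
From mathcomp Require Import all_boot all_order all_algebra.
From mathcomp Require Import all_classical all_reals all_analysis.
From mathcomp Require Import ess_sup_inf.
Set Implicit Arguments. Unset Strict Implicit. Unset Printing Implicit Defensive.
Import Order.TTheory GRing.Theory Num.Theory.
Import numFieldNormedType.Exports.
Local Open Scope classical_set_scope.
Local Open Scope ring_scope.

Section modes.
Variable R : realType.
Variables (d : measure_display) (T : measurableType d) (P : probability T R).
Variables (Xs : nat -> {RV P >-> R}) (X : {RV P >-> R}).

Definition conv_complete : Prop :=
  forall eps : R, 0 < eps ->
    (\sum_(0 <= n <oo) P [set w | (eps <= `|Xs n w - X w|)%R] < +oo)%E.

Definition conv_SLp (p : R) : Prop :=
  (\sum_(0 <= n <oo) 'E_P[(fun w => `|Xs n w - X w| `^ p)%R] < +oo)%E.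

Definition conv_SLinf : Prop :=
  (\sum_(0 <= n <oo) ess_sup P (fun w => (`|Xs n w - X w|%R)%:E) < +oo)%E.

Definition conv_Salpha_as (alpha : R) : Prop :=
  {ae P, forall w, (\sum_(0 <= n <oo) ((`|Xs n w - X w| `^ alpha)%R)%:E < +oo)%E}.

Definition bounded_lipschitz (f : R -> R) : Prop :=
  (exists M : R, forall x, `|f x| <= M) /\
  (exists L : R, forall x y, `|f x - f y| <= L * `|x - y|).

Definition conv_S1d : Prop :=
  forall f : R -> R, bounded_lipschitz f ->
    (\sum_(0 <= n <oo) `| 'E_P[f \o Xs n] - 'E_P[f \o X] | < +oo)%E.

Definition conv_S2d : Prop :=
  forall x : R, {for x, continuous (fun r => fine (cdf X r))} ->
    (\sum_(0 <= n <oo) `| cdf (Xs n) x - cdf X x | < +oo)%E.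

End modes.

Definition separating_example (R : realType)
  (Good Bad : forall (d : measure_display) (T : measurableType d)
      (P : probability T R), (nat -> {RV P >-> R}) -> {RV P >-> R} -> Prop) : Prop :=
  exists (d : measure_display) (T : measurableType d) (P : probability T R)
         (Xs : nat -> {RV P >-> R}) (X : {RV P >-> R}),
    Good d T P Xs X /\ ~ Bad d T P Xs X.

(* Main.v *)
Require Import Defs.
From HB Require Import structures.
From mathcomp Require Import all_boot all_order all_algebra.
From mathcomp Require Import all_classical all_reals all_analysis.
Import Order.TTheory GRing.Theory Num.Theory.
Local Open Scope ring_scope.

From mathcomp Require Import ess_sup_inf measurable_realfun.
From mathcomp Require Import ring lra.

Module Helpers.
Import numFieldNormedType.Exports.
Local Open Scope classical_set_scope.
Local Open Scope ring_scope.

Section series_facts.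
Variable R : realType.
Local Open Scope ereal_scope.

Lemma series_fin_bound (u : nat -> \bar R) (M : R) : (forall n, 0 <= u n) ->
  (forall N, \sum_(0 <= k < N) u k <= M%:E) -> \sum_(0 <= k <oo) u k < +oo.
Proof.
move=> u0 uM; apply: (@le_lt_trans _ _ M%:E); last exact: ltry.
apply: lime_le; first exact: is_cvg_ereal_nneg_natsum.
by apply: nearW => N; exact: uM.
Qed.

Lemma series_ev0 (u : nat -> \bar R) N : (forall n, 0 <= u n) ->
  (forall n, u n < +oo) -> (forall n, (N <= n)%N -> u n = 0) ->
  \sum_(0 <= k <oo) u k < +oo.
Proof.
move=> u0 ufin uN; rewrite (@nneseries_split R u 0 N) // add0n eseries0 ?adde0//.
exact: lte_sum_pinfty.
by move=> i /uN.
Qed.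

Lemma harmonic_inf : \sum_(0 <= k <oo) ((k.+1%:R : R)^-1)%:E = +oo.
Proof.
apply/eqP; rewrite eq_le leey /=; rewrite leNgt; apply/negP => hlt.
have hge : forall N, \sum_(0 <= k < N) ((k.+1%:R : R)^-1)%:E
   <= \sum_(0 <= k <oo) ((k.+1%:R : R)^-1)%:E.
  by move=> N; apply: nneseries_lim_ge => n _ _; rewrite lee_fin.
have hfin : \sum_(0 <= k <oo) ((k.+1%:R : R)^-1)%:E \is a fin_num.
  rewrite fin_numElt hlt andbT; apply: (@lt_le_trans _ _ 0); first exact: ltNy0.
  by apply: nneseries_ge0 => n _ _; rewrite lee_fin.
apply: (@dvg_harmonic R); apply: nondecreasing_is_cvgn.
  move=> m n mn; rewrite /series /=.
  rewrite -(subnKC mn) /index_iota !subn0 iotaD big_cat /= lerDl.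
  by apply: sumr_ge0 => i _; rewrite invr_ge0.
exists (fine (\sum_(0 <= k <oo) ((k.+1%:R : R)^-1)%:E)) => _ [n _ <-].
rewrite -lee_fin fineK // (le_trans _ (hge n))//.
by rewrite /series /= -sumEFin.
Qed.

Lemma harmonic_le (u : nat -> \bar R) : (forall n, ((n.+1%:R)^-1)%:E <= u n) ->
  \sum_(0 <= k <oo) u k = +oo.
Proof.
move=> hu; apply/eqP; rewrite eq_le leey /= -harmonic_inf.
by apply: lee_nneseries => // n _ _; rewrite lee_fin.
Qed.

Lemma sq_partial N : (\sum_(0 <= k < N.+1) ((k.+1%:R ^+ 2)^-1) <= 2 - (N.+1%:R)^-1 :> R)%R.
Proof.
elim: N => [|N IH].
  by rewrite big_nat1 expr1n invr1 /=; lra.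
rewrite big_nat_recr //= (le_trans (lerD IH (lexx _)))//.
have h1 : (0 < N.+1%:R :> R)%R by rewrite ltr0n.
have h2 : (0 < N.+2%:R :> R)%R by rewrite ltr0n.
have -> : (N.+2%:R = N.+1%:R + 1 :> R)%R by rewrite -natr1.
set x := (N.+1%:R : R).
have hx : (0 < x)%R by [].
have hy : (0 < x + 1)%R by lra.
have key : (((x + 1) ^+ 2)^-1 <= x^-1 - (x + 1)^-1)%R.
  have -> : (x^-1 - (x + 1)^-1 = (x * (x + 1))^-1 :> R)%R.
    by field; rewrite ?gt_eqF //; apply/andP; split; rewrite gt_eqF.
  rewrite lef_pV2 ?posrE ?exprn_gt0 ?mulr_gt0 //; nra.
move: key; set a := (((x + 1) ^+ 2)^-1)%R; set b := (x^-1)%R; set c := ((x + 1)^-1)%R.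
lra.
Qed.

Lemma sq_sum : \sum_(0 <= k <oo) ((k.+1%:R ^+ 2)^-1)%:E < +oo :> \bar R.
Proof.
apply: (@series_fin_bound _ 2%R) => [n|N]; first by rewrite lee_fin invr_ge0.
case: N => [|N]; first by rewrite big_geq // lee_fin.
rewrite sumEFin lee_fin (le_trans (sq_partial N))// lerBlDr lerDl invr_ge0//.
Qed.

End series_facts.

Section space.
Variable R : realType.
Definition PU := uniform_prob (@ltr01 R).
Definition UT := measurable_structure_g_sigma_algebraType__canonical__measurable_structure_Measurable
            (T:=lebesgue_stieltjes_measure_ocitv_type__canonical__classical_sets_Pointed R)
            (R.-ocitv).-measurable.
Definition sqf (a : R) : UT -> R := fun w => w ^+ 2 - a.
Lemma sqf_mfun a : measurable_fun setT (sqf a).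
Proof.
rewrite /sqf; apply: measurable_funB => //; exact: measurable_funX.
Qed.
HB.instance Definition _ a := isMeasurableFun.Build _ _ _ _ (sqf a) (sqf_mfun a).
Definition Xsq (a : R) : {RV PU >-> R} := sqf a.
Definition indf (c : R) : UT -> R := fun w => ((w : R) <= c)%R%:R.
Lemma indf_mfun c : measurable_fun setT (indf c).
Proof.
rewrite /indf. 
have -> : (fun w : UT => (((w : R) <= c)%R%:R : R)) = \1_(`]-oo, c]) .
  apply/funext => w; rewrite indicE set_itvE; case: (boolP ((w : R) <= c)) => h; first by rewrite mem_set.
  by rewrite memNset //=; apply/negP.
exact: measurable_indic.
Qed.
HB.instance Definition _ c := isMeasurableFun.Build _ _ _ _ (indf c) (indf_mfun c).
Definition Xind (c : R) : {RV PU >-> R} := indf c.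
Definition Xc (c : R) : {RV PU >-> R} := cst c.

Lemma PU_E (A : set UT) : measurable A -> PU A = lebesgue_measure (A `&` `[0, 1]).
Proof.
move=> mA; rewrite /PU /uniform_prob integral_uniform_pdf.
rewrite (eq_integral (cst 1%E)); last first.
  by move=> x; rewrite inE => -[_]; rewrite /= in_itv /= /uniform_pdf => ->; rewrite subr0 invr1.
by rewrite integral_cst ?mul1e //; exact: measurableI.
Qed.

End space.

Section gen.
Variable R : realType.

Lemma arch_eps (eps : R) : 0 < eps ->
  exists N, forall n, (N <= n)%N -> (n.+1%:R : R)^-1 < eps.
Proof.
move=> e0; have := @cvg_harmonic R; move/cvgrPdist_lt => /(_ _ e0) [N _ hN].
exists N => n Nn; have := hN n Nn; by rewrite /= sub0r normrN ger0_norm // invr_ge0.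
Qed.

Definition fmin (x : R) : R := Num.min `|x| 1.

Lemma fmin_bl : bounded_lipschitz fmin.
Proof.
rewrite /bounded_lipschitz; split.
  exists 1 => x; rewrite /fmin ger0_norm; first by rewrite ge_min lexx orbT.
  by rewrite /Num.min; case: ifP.
exists 1 => x y; rewrite mul1r /fmin.
have h := ler_dist_dist x y.
move: h; rewrite ler_norml => /andP[h1 h2].
have hx := normr_ge0 x; have hy := normr_ge0 y.
move: h1 h2 hx hy; set a := `|x|; set b := `|y|; set e := `|x - y|.
move=> h1 h2 hx hy.
rewrite /Num.min; case: ifP => ha; case: ifP => hb; rewrite ler_norml;
  apply/andP; split; lra.
Qed.

Lemma bl_cont (f : R -> R) : bounded_lipschitz f -> continuous f.
Proof.
move=> [_ [L hL]] x; apply/cvgrPdist_lt => e e0.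
apply/nbhs_ballP; exists (e / (`|L| + 1)) => /=.
  by rewrite divr_gt0 // ltr_wpDl.
move=> y; rewrite /ball /= => hxy.
apply: (le_lt_trans (hL x y)).
have hL1 : 0 < `|L| + 1 by rewrite ltr_wpDl.
apply: (le_lt_trans (y := (`|L| + 1) * `|x - y|)).
  apply: ler_wpM2r; first exact: normr_ge0.
  by rewrite (le_trans (ler_norm L)) // lerDl.
by rewrite mulrC -ltr_pdivlMr.
Qed.

Lemma bl_meas (f : R -> R) : bounded_lipschitz f -> measurable_fun setT f.
Proof. by move=> /bl_cont; exact: continuous_measurable_fun. Qed.

End gen.

Section gen2.
Variable R : realType.
Variables (d : measure_display) (T : measurableType d) (P : probability T R).

Lemma bnd_int (g : T -> R) (M : R) : measurable_fun setT g ->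
  (forall x, `|g x| <= M) -> P.-integrable setT (EFin \o g).
Proof.
move=> mg gM; apply: (@le_integrable _ _ _ P setT measurableT _ (EFin \o cst M)) => //.
- exact/measurable_EFinP.
- move=> x _ /=; rewrite lee_fin (le_trans (gM x))//.
  by rewrite ler_norm.
- exact: finite_measure_integrable_cst.
Qed.

Lemma int_diff_le (g1 g2 : T -> R) (M1 M2 K : R) :
  measurable_fun setT g1 -> measurable_fun setT g2 ->
  (forall x, `|g1 x| <= M1) -> (forall x, `|g2 x| <= M2) ->
  (forall x, `|g1 x - g2 x| <= K) ->
  (`| 'E_P[g1] - 'E_P[g2] | <= K%:E)%E.
Proof.
move=> m1 m2 b1 b2 bK; rewrite expectation.unlock.
rewrite -integralB_EFin //; [|exact: bnd_int b1|exact: bnd_int b2].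
apply: (le_trans (le_abse_integral _ _ _)) => //.
  apply/measurable_EFinP; exact: measurable_funB.
apply: (@le_trans _ _ (\int[P]_(x in setT) (cst K%:E x))%E).
  apply: ge0_le_integral => //.
  - apply/measurable_EFinP; apply: measurableT_comp => //.
    exact: measurable_funB.
  - by move=> x _; rewrite -EFinB /= lee_fin bK.
have := expectation_cst P K; rewrite expectation.unlock => ->; exact: lexx.
Qed.

End gen2.

Section ex.
Variable R : realType.

Lemma pre_sq (a r c : R) : 0 <= c <= 1 -> c ^+ 2 = r + a ->
  (sqf R a @^-1` `]-oo, r]) `&` `[0, 1] = `[0, c]%classic :> set R.
Proof.
move=> /andP[c0 c1] hc; apply/seteqP; split => w /=; rewrite /sqf !in_itv /=.
  move=> [hw /andP[w0 w1]]; rewrite w0 /=.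
  rewrite -(@ler_sqr _ w c) ?nnegrE //; lra.
move=> /andP[w0 wc]; split; last by rewrite w0 /=; lra.
have : w ^+ 2 <= c ^+ 2 by rewrite ler_sqr ?nnegrE.
lra.
Qed.

Lemma cdf_Xsq (a r c : R) : 0 <= c <= 1 -> c ^+ 2 = r + a ->
  cdf (Xsq R a) r = c%:E.
Proof.
move=> hc hcr; rewrite /cdf /distribution /pushforward.
apply: eq_trans; first by apply: PU_E; exact: measurable_funPTI.
rewrite (pre_sq a r c hc hcr) lebesgue_measure_itv /= lte_fin.
case/andP: hc => c0 c1; case: ltP => h; first by rewrite oppr0 adde0.
by have -> : c = 0 by apply/le_anti; rewrite c0 h.
Qed.


Definition cn (n : nat) : R := (n.+1%:R)^-1.
Definition an (n : nat) : R := (n.+1%:R ^+ 2)^-1.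

Lemma cn_ge0 n : 0 <= cn n. Proof. by rewrite /cn invr_ge0. Qed.
Lemma cn_gt0 n : 0 < cn n. Proof. by rewrite /cn invr_gt0 ltr0n. Qed.
Lemma cn_le1 n : cn n <= 1.
Proof. by rewrite /cn invf_le1 ?ler1n ?ltr0n. Qed.
Lemma an_cn n : an n = cn n ^+ 2. Proof. by rewrite /an /cn exprVn. Qed.
Lemma an_ge0 n : 0 <= an n. Proof. by rewrite an_cn sqr_ge0. Qed.
Lemma an_le_cn n : an n <= cn n.
Proof.
rewrite an_cn expr2; have := cn_ge0 n; have := cn_le1 n; nra.
Qed.

Lemma diff_Xsq (a : R) (w : UT R) : 0 <= a -> `|Xsq R a w - Xsq R 0 w| = a.
Proof.
move=> a0; rewrite /= /sqf subr0 addrAC subrr add0r normrN ger0_norm //.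
Qed.

Lemma cdfX0 : cdf (Xsq R 0) 0 = 0%:E.
Proof. by apply: (cdf_Xsq 0 0 0); rewrite ?lexx ?ler01 // expr0n addr0. Qed.

Lemma cdfXn n : cdf (Xsq R (an n)) 0 = (cn n)%:E.
Proof.
apply: (cdf_Xsq (an n) 0 (cn n)); first by rewrite cn_ge0 cn_le1.
by rewrite add0r an_cn.
Qed.

Lemma cont0 : {for 0, continuous (fun r => fine (cdf (Xsq R 0) r))}.
Proof.
apply/cvgrPdist_lt => e e0.
set c := Num.min (e / 2) 1.
have c0 : 0 < c by rewrite lt_min ltr01 andbT divr_gt0.
have c1 : c <= 1 by rewrite ge_min lexx orbT.
have ce : c < e by rewrite gt_min; apply/orP; left; rewrite ltr_pdivrMr //; lra.
apply/nbhs_ballP; exists (c ^+ 2); first by rewrite /= exprn_gt0.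
move=> r hr0.
have hr : `|r| < c ^+ 2 by move: hr0; rewrite /ball /= sub0r normrN.
have hr' : r <= c ^+ 2 by rewrite (le_trans (ler_norm r)) // ltW.
change (`|fine (cdf (Xsq R 0) 0) - fine (cdf (Xsq R 0) r)| < e).
rewrite cdfX0 /= sub0r normrN.
have hle : (cdf (Xsq R 0) r <= c%:E)%E.
  rewrite -(cdf_Xsq 0 (c ^+ 2) c); first exact: cdf_nondecreasing.
    by rewrite (ltW c0) c1.
  by rewrite addr0.
have h0 : (0 <= cdf (Xsq R 0) r)%E by exact: cdf_ge0.
have hfin : cdf (Xsq R 0) r \is a fin_num.
  by rewrite fin_numElt (lt_le_trans ltNy0 h0) (le_lt_trans hle (ltry _)).
rewrite ger0_norm; last by rewrite -lee_fin fineK.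
by apply: (le_lt_trans _ ce); rewrite -lee_fin fineK.
Qed.

Definition XsS (n : nat) := Xsq R (an n).
Definition XS := Xsq R 0.

Lemma shift_notS2d : ~ conv_S2d XsS XS.
Proof.
move=> /(_ 0 cont0); rewrite harmonic_le ?ltxx // => n.
by rewrite /XsS /XS cdfXn cdfX0 -EFinB subr0 /= ger0_norm ?cn_ge0.
Qed.

Lemma shift_S1d : conv_S1d XsS XS.
Proof.
move=> f hf; have [[M hM] [L hL]] := hf.
have L0 : 0 <= L by have := hL 1 0; rewrite subr0 normr1 mulr1; apply: le_trans.
apply: (@le_lt_trans _ _ (\sum_(0 <= n <oo) (L%:E * (an n)%:E))%E).
  apply: lee_nneseries => [n _ _|n _]; first exact: abse_ge0.
  rewrite -EFinM; apply: (@int_diff_le R _ _ (PU R) (f \o XsS n) (f \o XS) M M (L * an n)).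
  - apply: measurableT_comp; [exact: bl_meas | exact: measurable_funP].
  - apply: measurableT_comp; [exact: bl_meas | exact: measurable_funP].
  - by move=> x; exact: hM.
  - by move=> x; exact: hM.
  - move=> w /=; apply: (le_trans (hL _ _)).
    by rewrite (diff_Xsq (an n) w (an_ge0 n)).
rewrite nneseriesZl; last by move=> i _; rewrite lee_fin an_ge0.
by rewrite lte_mul_pinfty ?lee_fin // sq_sum.
Qed.


Lemma PU_T_gt0 : (0 < PU R setT)%E.
Proof. have h : PU R setT = 1%E := probability_setT _. by rewrite h lte01. Qed.

Lemma shift_SLinf : conv_SLinf XsS XS.
Proof.
rewrite /conv_SLinf (@eq_eseriesr _ _ (fun n => (an n)%:E)); first exact: sq_sum.
move=> n _.
have -> : (fun w => (`|XsS n w - XS w|)%:E) = cst (an n)%:E.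
  by apply/funext => w; rewrite /XsS /XS diff_Xsq // an_ge0.
exact: ess_sup_cst PU_T_gt0.
Qed.

Lemma shift_SL1 : conv_SLp XsS XS 1.
Proof.
rewrite /conv_SLp (@eq_eseriesr _ _ (fun n => (an n)%:E)); first exact: sq_sum.
move=> n _.
have -> : (fun w => `|XsS n w - XS w| `^ 1) = cst (an n).
  by apply/funext => w; rewrite /XsS /XS diff_Xsq ?an_ge0 // powRr1 // an_ge0.
exact: expectation_cst.
Qed.

Lemma shift_complete : conv_complete XsS XS.
Proof.
move=> eps e0; have [N hN] := arch_eps R eps e0.
apply: (series_ev0 R _ N).
- by move=> n; exact: measure_ge0.
- move=> n; apply: (le_lt_trans (probability_le1 _ _)) => //.
  + have -> : [set w | eps <= `|XsS n w - XS w|] = if eps <= an n then setT else set0.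
      case: ifP => h; apply/seteqP; split => w //=;
        by rewrite /XsS /XS diff_Xsq ?an_ge0 // h.
    by case: ifP.
  + exact: ltry.
- move=> n Nn.
  have -> : [set w | eps <= `|XsS n w - XS w|] = set0.
    apply/seteqP; split => w //=; rewrite /XsS /XS diff_Xsq ?an_ge0 // => h.
    have := le_lt_trans (le_trans h (an_le_cn n)) (hN n Nn).
    by rewrite ltxx.
  exact: measure0.
Qed.


Lemma PU_setT : PU R setT = 1%E.
Proof. exact: probability_setT. Qed.

Lemma cdf_Xc (v x : R) : cdf (Xc R v) x = (if v <= x then 1 else 0)%:E.
Proof.
rewrite /cdf /distribution /pushforward.
case: ifP => h.
  have -> : Xc R v @^-1` `]-oo, x] = setT.
    by apply/seteqP; split => w //= _; rewrite in_itv /= h.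
  exact: PU_setT.
have -> : Xc R v @^-1` `]-oo, x] = set0.
  by apply/seteqP; split => w //=; rewrite in_itv /= h.
exact: measure0.
Qed.

Lemma E_fmin_c (v : R) : ('E_(PU R)[fmin R \o Xc R v] = (fmin R v)%:E)%E.
Proof.
have -> : fmin R \o Xc R v = cst (fmin R v) by apply/funext.
exact: expectation_cst.
Qed.

Lemma fmin0 : fmin R 0 = 0.
Proof. by rewrite /fmin normr0 /Num.min ltr01. Qed.

Lemma fmin_cn n : fmin R (cn n) = cn n.
Proof.
rewrite /fmin ger0_norm ?cn_ge0 // /Num.min; case: ifP => // h.
by apply/le_anti; rewrite cn_le1 leNgt h.
Qed.

Definition XsC (n : nat) := Xc R (- cn n).
Definition XC := Xc R 0.

Lemma const_notS1d : ~ conv_S1d XsC XC.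
Proof.
move=> /(_ (fmin R) (fmin_bl R)); rewrite harmonic_le ?ltxx // => n.
rewrite /XsC /XC !E_fmin_c -EFinB /= fmin0 subr0.
rewrite (_ : fmin R (- cn n) = cn n); first by rewrite ger0_norm ?cn_ge0.
by rewrite /fmin normrN -/(fmin R (cn n)) fmin_cn.
Qed.

Lemma const_S2d : conv_S2d XsC XC.
Proof.
move=> x _.
have [N hN] : exists N, forall n, (N <= n)%N -> (- cn n <= x) = (0 <= x).
  case: (leP 0 x) => hx.
    by exists 0%N => n _; apply: (le_trans _ hx); rewrite oppr_le0 cn_ge0.
  have hx2 : 0 < - x by rewrite oppr_gt0.
  have [N hN] := arch_eps R (- x) hx2.
  exists N => n Nn; apply/negbTE; rewrite -ltNge ltrNr; exact: hN.
apply: (series_ev0 R _ N).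
- by move=> n; exact: abse_ge0.
- by move=> n; rewrite /XsC /XC !cdf_Xc -EFinB /= ltry.
- by move=> n Nn; rewrite /XsC /XC !cdf_Xc (hN n Nn) -EFinB subrr /= normr0.
Qed.

Lemma const_complete : conv_complete XsC XC.
Proof.
move=> eps e0; have [N hN] := arch_eps R eps e0.
have hd n w : `|XsC n w - XC w| = cn n by rewrite /= subr0 normrN ger0_norm ?cn_ge0.
apply: (series_ev0 R _ N).
- by move=> n; exact: measure_ge0.
- move=> n; apply: (le_lt_trans (probability_le1 _ _)) => //.
  + have -> : [set w | eps <= `|XsC n w - XC w|] = if eps <= cn n then setT else set0.
      case: ifP => h; apply/seteqP; split => w //=; rewrite hd ?h //.
    by case: ifP.
  + exact: ltry.
- move=> n Nn.
  have -> : [set w | eps <= `|XsC n w - XC w|] = set0.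
    apply/seteqP; split => w //=; rewrite subr0 normrN ger0_norm ?cn_ge0 // => h.
    have := le_lt_trans h (hN n Nn).
    by rewrite ltxx.
  exact: measure0.
Qed.

Lemma itv_I01 (c : R) : 0 <= c <= 1 ->
  `]-oo, c]%classic `&` `[0, 1]%classic = `[0, c]%classic :> set R.
Proof.
move=> /andP[c0 c1]; apply/seteqP; split => w /=; rewrite !in_itv /=.
  by move=> [wc /andP[w0 w1]]; rewrite w0 wc.
by move=> /andP[w0 wc]; rewrite wc w0 /= (le_trans wc c1).
Qed.

Lemma PU_itv (c : R) : 0 <= c <= 1 -> PU R `]-oo, c] = c%:E.
Proof.
move=> hc; apply: eq_trans; first by apply: PU_E.
rewrite itv_I01 // lebesgue_measure_itv /= lte_fin.
case/andP: hc => c0 c1; case: ltP => h; first by rewrite oppr0 adde0.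
by have -> : c = 0 by apply/le_anti; rewrite c0 h.
Qed.

Lemma indf_E (c : R) : indf R c = \1_(`]-oo, c]%classic).
Proof.
apply/funext => w; rewrite /indf indicE set_itvE.
case: (boolP ((w : R) <= c)) => h; first by rewrite mem_set.
by rewrite memNset //=; apply/negP.
Qed.

Lemma fmin_indf (c : R) : fmin R \o Xind R c = indf R c.
Proof.
apply/funext => w /=; rewrite /indf; case: ((w : R) <= c) => /=.
  by rewrite /fmin normr1 /Num.min ltxx.
exact: fmin0.
Qed.

Definition XsI (n : nat) := Xind R (cn n).

Lemma ind_notS1d : ~ conv_S1d XsI XC.
Proof.
move=> /(_ (fmin R) (fmin_bl R)); rewrite harmonic_le ?ltxx // => n.
rewrite /XsI /XC E_fmin_c fmin_indf fmin0 indf_E.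
rewrite expectation_indic //.
rewrite [X in `|X - _|%E](_ : _ = (cn n)%:E); last by apply: PU_itv; rewrite cn_ge0 cn_le1.
by rewrite -EFinB subr0 /= ger0_norm ?cn_ge0.
Qed.

Lemma ind_as (alpha : R) : 0 < alpha -> conv_Salpha_as XsI XC alpha.
Proof.
move=> a0; exists `]-oo, 0]%classic; split => //.
  by apply: eq_trans (PU_itv 0 _); rewrite ?lexx ?ler01.
move=> w /= hw; rewrite in_itv /= leNgt; apply/negP => w0; apply: hw.
have [N hN] := arch_eps R w w0.
apply: (series_ev0 R _ N).
- by move=> n; rewrite lee_fin powR_ge0.
- by move=> n; exact: ltry.
- move=> n Nn; rewrite /XsI /XC /= /indf.
  have -> : ((w : R) <= cn n) = false by apply/negbTE; rewrite -ltNge; exact: hN.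
  by rewrite /= subr0 normr0 powR0 // gt_eqF.
Qed.

End ex.

End Helpers.
Import Helpers.

Theorem proposition2p1 (R : realType) :
  (* (i) *)
  (separating_example (@conv_S1d R) (@conv_S2d R) /\
   separating_example (@conv_S2d R) (@conv_S1d R)) /\
  (* (ii) *)
  separating_example (@conv_SLinf R) (@conv_S2d R) /\
  (* (iii) *)
  separating_example (fun d T P Xs X => @conv_SLp R d T P Xs X 1) (@conv_S2d R) /\
  (* (iv) *)
  (forall alpha : R, 0 < alpha ->
     separating_example (fun d T P Xs X => @conv_Salpha_as R d T P Xs X alpha)
                        (@conv_S1d R)) /\
  (* (v) *)
  (separating_example (@conv_complete R) (@conv_S1d R) /\
   separating_example (@conv_complete R) (@conv_S2d R)).

Proof.
split; [split|split; [|split; [|split; [|split]]]].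
- exists _, _, (PU R), (XsS R), (XS R); split; [exact: shift_S1d | exact: shift_notS2d].
- exists _, _, (PU R), (XsC R), (XC R); split; [exact: const_S2d | exact: const_notS1d].
- exists _, _, (PU R), (XsS R), (XS R); split; [exact: shift_SLinf | exact: shift_notS2d].
- exists _, _, (PU R), (XsS R), (XS R); split; [exact: shift_SL1 | exact: shift_notS2d].
- move=> alpha a0.
  exists _, _, (PU R), (XsI R), (XC R); split; [exact: ind_as | exact: ind_notS1d].
- exists _, _, (PU R), (XsC R), (XC R); split; [exact: const_complete | exact: const_notS1d].
- exists _, _, (PU R), (XsS R), (XS R); split; [exact: shift_complete | exact: shift_notS2d].
Qed.
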